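(* Let $\mathcal H$ be the Hilbert space of $n$ qubits. Let $\mathsf H_0=\{|\Psi\rangle\langle\Psi| : |\Psi\rangle=|\phi\rangle\otimes|\psi\rangle,\ |\phi\rangle,|\psi\rangle\in\mathcal H\text{ unit vectors}\}$ and, for $\varepsilon\ge0$, $\mathsf H_1^{\varepsilon}=\{|\Psi\rangle\langle\Psi| : |\Psi\rangle\in\mathcal H^{\otimes2},\ \max_{|\phi\rangle,|\psi\rangle\in\mathcal H}F(|\Psi\rangle\langle\Psi|,|\phi\rangle\langle\phi|\otimes|\psi\rangle\langle\psi|)\le1-\varepsilon\}$. Then for every $0\le\varepsilon\le 1-2^{-n/2}$ and every POVM $\{M_0,M_1\}$ on $\mathcal H^{\otimes2}$, $$\sup_{\rho\in\mathsf H_0}\operatorname{tr}(M_1\rho)+\sup_{\rho\in\mathsf H_1^{\varepsilon}}\operatorname{tr}(M_0\rho)\ \ge\ 1,$$ i.e., no measurement distinguishes $\mathsf H_0$ from $\mathsf H_1^\varepsilon$ better than guessing at random.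
   Context: The fidelity of density operators is $F(\rho,\sigma)=\operatorname{tr}\sqrt{\sqrt\rho\,\sigma\sqrt\rho}$; for pure states $F(|a\rangle\langle a|,|b\rangle\langle b|)=|\langle a|b\rangle|$. A POVM $\{M_0,M_1\}$ is a pair of positive semidefinite operators with $M_0+M_1=I$; outcome $i$ (meaning ''the state is in the $i$th set'') occurs with probability $\operatorname{tr}(M_i\rho)$. *)

(* Defs.v *)
From HB Require Import structures.
From mathcomp Require Import all_boot all_order all_algebra.
From mathcomp Require Import classical_sets boolp reals.
From mathcomp Require Import complex mxtens.
Set Implicit Arguments. Unset Strict Implicit. Unset Printing Implicit Defensive.
Import Order.TTheory GRing.Theory Num.Theory.
Local Open Scope ring_scope.
Local Open Scope classical_set_scope.

Section Quantum.
Variable R : realType.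
Local Notation C := R[i].

Definition adj {m n} (A : 'M[C]_(m, n)) : 'M[C]_(n, m) := (map_mx Num.conj A)^T.

Definition inner {d} (a b : 'cV[C]_d) : C := (adj a *m b) 0 0.

Definition unit_vec {d} (v : 'cV[C]_d) : Prop := inner v v = 1.

Definition proj {d} (v : 'cV[C]_d) : 'M[C]_d := v *m adj v.

Definition psd {d} (A : 'M[C]_d) : Prop :=
  adj A = A /\ forall v : 'cV[C]_d, 0 <= inner v (A *m v).

Definition povm {d} (M0 M1 : 'M[C]_d) : Prop :=
  psd M0 /\ psd M1 /\ M0 + M1 = 1%:M.

(* fidelity of pure states: F(|a><a|,|b><b|) = |<a|b>| *)
Definition pure_fidelity {d} (a b : 'cV[C]_d) : R := complex.Re `|inner a b|.

(* probability of outcome M on state rho: tr(M rho) (real part; it is real) *)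
Definition prob {d} (M rho : 'M[C]_d) : R := complex.Re (\tr (M *m rho)).

Definition qdim (n : nat) : nat := 2 ^ n.

Definition H0 (n : nat) : set 'M[C]_(qdim n * qdim n) :=
  [set rho | exists (phi psi : 'cV[C]_(qdim n)),
     unit_vec phi /\ unit_vec psi /\ rho = proj (phi *t psi)].

(* H_1^eps : pure states at fidelity <= 1 - eps from all product states
   (|phi><phi| (x) |psi><psi| = |phi (x) psi><phi (x) psi|) *)
Definition H1 (n : nat) (eps : R) : set 'M[C]_(qdim n * qdim n) :=
  [set rho | exists Psi : 'cV[C]_(qdim n * qdim n),
     unit_vec Psi /\ rho = proj Psi /\
     (forall phi psi : 'cV[C]_(qdim n), unit_vec phi -> unit_vec psi ->
        pure_fidelity Psi (phi *t psi) <= 1 - eps)].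

End Quantum.

(* Main.v *)
Require Import Defs.
From HB Require Import structures.
From mathcomp Require Import all_boot all_order all_algebra.
From mathcomp Require Import classical_sets boolp reals.
From mathcomp Require Import complex mxtens.
From mathcomp Require Import ring lra.
Import Order.TTheory GRing.Theory Num.Theory.
Local Open Scope ring_scope.
Local Open Scope classical_set_scope.

Section Aux.
Variable R : realType.
Local Notation C := R[i].

Lemma innerE d (v w : 'cV[C]_d) : inner v w = \sum_k Num.conj (v k 0) * w k 0.
Proof. by rewrite /inner /adj !mxE; apply: eq_bigr => k _; rewrite !mxE. Qed.

Lemma inner_addr d (v w1 w2 : 'cV[C]_d) : inner v (w1 + w2) = inner v w1 + inner v w2.
Proof. by rewrite !innerE -big_split; apply: eq_bigr => k _; rewrite mxE mulrDr. Qed.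

Lemma inner_sumr d m (v : 'cV[C]_d) (b : 'I_m -> C) (u : 'I_m -> 'cV[C]_d) :
  inner v (\sum_i b i *: u i) = \sum_i b i * inner v (u i).
Proof.
rewrite innerE; under eq_bigr do rewrite summxE mulr_sumr.
rewrite exchange_big; apply: eq_bigr => i _; rewrite innerE mulr_sumr.
by apply: eq_bigr => k _; rewrite mxE mulrCA.
Qed.

Lemma inner_suml d m (w : 'cV[C]_d) (a : 'I_m -> C) (u : 'I_m -> 'cV[C]_d) :
  inner (\sum_i a i *: u i) w = \sum_i Num.conj (a i) * inner (u i) w.
Proof.
rewrite innerE; under eq_bigr do rewrite summxE rmorph_sum mulr_suml.
rewrite exchange_big; apply: eq_bigr => i _; rewrite innerE mulr_sumr.
by apply: eq_bigr => k _; rewrite mxE rmorphM mulrA.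
Qed.

Lemma mulmx_sumZ d m (M : 'M[C]_d) (b : 'I_m -> C) (u : 'I_m -> 'cV[C]_d) :
  M *m (\sum_i b i *: u i) = \sum_i b i *: (M *m u i).
Proof. by rewrite mulmx_sumr; apply: eq_bigr => i _; rewrite scalemxAr. Qed.

Lemma inner_delta d (i : 'I_d) (v : 'cV[C]_d) : inner (delta_mx i 0) v = v i 0.
Proof.
rewrite innerE (bigD1 i) //= big1 ?addr0.
  by rewrite mxE !eqxx /= rmorph1 mul1r.
by move=> k /negbTE kn; rewrite mxE kn /= rmorph0 mul0r.
Qed.

Lemma idx00 : (0 : 'I_(1 * 1)) = mxtens_index (ord0, ord0).
Proof. by apply: val_inj. Qed.

Lemma adj_tens m n p q (A : 'M[C]_(m,n)) (B : 'M[C]_(p,q)) :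
  adj (A *t B) = adj A *t adj B.
Proof. by apply/matrixP => i j; rewrite !mxE rmorphM. Qed.

Lemma inner_tens m p (a c : 'cV[C]_m) (b e : 'cV[C]_p) :
  inner (a *t b) (c *t e) = inner a c * inner b e.
Proof.
rewrite /inner.
have -> : adj (a *t b : 'cV_(m * p)) = (adj a *t adj b : 'rV_(m * p)).
  by apply/matrixP => i j; rewrite !mxE rmorphM.
have H := congr1 (fun M : 'M_(1 * 1, 1 * 1) => M (mxtens_index (ord0, ord0)) (mxtens_index (ord0, ord0))) (tensmx_mul (adj a) (adj b) c e).
rewrite /= tensmxE in H.
rewrite -H idx00.
by [].
Qed.

Lemma tens_entry m p (a : 'cV[C]_m) (b : 'cV[C]_p) i j :
  (a *t b) (mxtens_index (i, j)) 0 = a i 0 * b j 0.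
Proof. by rewrite -(tensmxE a b i j ord0 ord0); congr (_ _ _); apply: val_inj. Qed.

Lemma prob_proj d (M : 'M[C]_d) v : prob M (proj v) = complex.Re (inner v (M *m v)).
Proof.
rewrite /prob /proj mulmxA mxtrace_mulC /mxtrace big_ord1 /inner.
by [].
Qed.

Lemma Re_le (z : C) (x : R) : z <= (x%:C)%C -> complex.Re z <= x.
Proof. by rewrite lecE => /andP[_]. Qed.

Lemma le_Re (z : C) (x : R) : 0 <= z -> complex.Re z <= x -> z <= (x%:C)%C.
Proof. by move=> z0 h; rewrite lecE (ger0_Im z0) /= eqxx. Qed.

End Aux.

Section Main.
Variable R : realType.
Local Notation C := R[i].

Definition sg (b : bool) : C := if b then 1 else -1.

Lemma sg_real b : sg b \is Num.real.
Proof. by case: b; rewrite /sg ?rpred1 ?rpredN1. Qed.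

Lemma sgK b : sg b * sg b = 1.
Proof. by case: b; rewrite /sg ?mul1r ?mulN1r ?opprK. Qed.

Lemma sign_sum d (i k : 'I_d) :
  \sum_(s : {ffun 'I_d -> bool}) sg (s i) * sg (s k) =
  (i == k)%:R * #|{ffun 'I_d -> bool}|%:R.
Proof.
case: eqVneq => [<-|ik].
  rewrite mul1r; under eq_bigr do rewrite sgK.
  by rewrite sumr_const.
rewrite mul0r.
set S := \sum_ _ _.
pose t (s : {ffun 'I_d -> bool}) : {ffun 'I_d -> bool} :=
  [ffun j => if j == i then ~~ s j else s j].
have tK : involutive t.
  move=> s; apply/ffunP => j; rewrite !ffunE.
  by case: eqP => // _; rewrite negbK.
have hS : S = - S.
  rewrite {1}/S (reindex_inj (inv_inj tK)) /S -sumrN.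
  apply: eq_bigr => s _; rewrite !ffunE eqxx eq_sym (negbTE ik).
  by case: (s i); rewrite /sg /= ?mul1r ?mulN1r ?opprK.
have : S *+ 2 == 0 by rewrite mulr2n {1}hS addNr.
by rewrite mulrn_eq0 /= => /eqP.
Qed.

Lemma conj_real_mul (c : R) b : Num.conj ((c%:C)%C * sg b) = (c%:C)%C * sg b.
Proof.
apply: conj_Creal; apply: rpredM; last exact: sg_real.
by apply/complex_realP; exists c.
Qed.

Lemma delta_unit d (i : 'I_d) : unit_vec (delta_mx i (0 : 'I_1) : 'cV[C]_d).
Proof. by rewrite /unit_vec inner_delta mxE !eqxx. Qed.

Definition ev {d} (i : 'I_d) : 'cV[C]_(d * d) :=
  delta_mx i (0 : 'I_1) *t delta_mx i (0 : 'I_1).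

Lemma inner_e d (i k : 'I_d) : inner (ev i) (ev k) = (i == k)%:R.
Proof.
rewrite inner_tens !inner_delta mxE eqxx andbT.
by case: (i == k); rewrite ?mul1r ?mul0r.
Qed.

Lemma inner_ee d (i : 'I_d) : inner (ev i) (ev i) = 1 :> C.
Proof. by rewrite inner_e eqxx. Qed.

Lemma Q_Psi d (c : R) (s : {ffun 'I_d -> bool}) (M : 'M[C]_(d * d)) :
  let Psi := \sum_i ((c%:C)%C * sg (s i)) *: ev i in
  inner Psi (M *m Psi) =
  \sum_i \sum_k ((c%:C)%C ^+ 2 * (sg (s i) * sg (s k))) * inner (ev i) (M *m ev k).
Proof.
move=> Psi; rewrite /Psi mulmx_sumZ inner_suml.
apply: eq_bigr => i _; rewrite inner_sumr mulr_sumr conj_real_mul.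
apply: eq_bigr => k _; ring.
Qed.

Lemma sum_norm_le d (phi psi : 'cV[C]_d) : unit_vec phi -> unit_vec psi ->
  \sum_i `|phi i 0| * `|psi i 0| <= 1.
Proof.
move=> u1 u2.
have sq : forall v : 'cV[C]_d, unit_vec v -> \sum_i `|v i 0| ^+ 2 = 1.
  move=> v uv; rewrite -uv /unit_vec innerE; apply: eq_bigr => i _.
  by rewrite normCK mulrC.
have h : forall i, (`|phi i 0| * `|psi i 0|) *+ 2 <= `|phi i 0| ^+ 2 + `|psi i 0| ^+ 2.
  move=> i; rewrite -subr_ge0.
  have -> : `|phi i 0| ^+ 2 + `|psi i 0| ^+ 2 - (`|phi i 0| * `|psi i 0|) *+ 2
     = (`|phi i 0| - `|psi i 0|) ^+ 2 by ring.
  by apply: real_exprn_even_ge0; rewrite // rpredB ?normr_real.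
suff H : (\sum_i `|phi i 0| * `|psi i 0|) *+ 2 <= 1 *+ 2 by move: H; rewrite lerMn2r.
rewrite -sumrMnl.
apply: (le_trans (ler_sum _ (fun i _ => h i))).
by rewrite big_split /= !sq.
Qed.

End Main.
Arguments sg {R}.
Arguments ev {R d}.

Theorem corollary6p2 (R : realType) (n : nat) (eps : R)
  (M0 M1 : 'M[R[i]]_(qdim n * qdim n)) :
  0 <= eps -> eps <= 1 - (Num.sqrt (2 : R) ^+ n)^-1 ->
  povm M0 M1 ->
  sup [set prob M1 rho | rho in @H0 R n] +
  sup [set prob M0 rho | rho in @H1 R n eps] >= 1.
Proof.
move=> e0 epsle [[_ ps0] [[_ ps1] sumI]].
set S0 := sup _; set S1 := sup _.
set c : R := (Num.sqrt (2 : R) ^+ n)^-1.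
have c0 : 0 <= c by rewrite /c invr_ge0 exprn_ge0 ?sqrtr_ge0.
have cd : (c%:C)%C ^+ 2 * (qdim n)%:R = 1 :> R[i].
  have -> : (c%:C)%C ^+ 2 * (qdim n)%:R = ((c ^+ 2 * (qdim n)%:R)%:C)%C.
    by rewrite rmorphM rmorphXn rmorph_nat.
  have -> : c ^+ 2 * (qdim n)%:R = 1; last by [].
  rewrite /c /qdim exprVn -exprM mulnC exprM sqr_sqrtr ?ler0n // natrX mulVf //.
  by rewrite expf_neq0 // pnatr_eq0.
have Qsum : forall v : 'cV[R[i]]_(qdim n * qdim n),
    inner v (M0 *m v) + inner v (M1 *m v) = inner v v.
  by move=> v; rewrite -inner_addr -mulmxDl sumI mul1mx.
have ub : forall (M M' : 'M[R[i]]_(qdim n * qdim n)) v,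
    (forall w, 0 <= inner w (M *m w)) -> (forall w, 0 <= inner w (M' *m w)) ->
    inner v (M *m v) + inner v (M' *m v) = inner v v ->
    unit_vec v -> prob M' (proj v) <= 1.
  move=> M M' v pM pM' hs uv; rewrite prob_proj.
  apply: (@Re_le R _ 1); rewrite /=.
  have -> : inner v (M' *m v) = 1 - inner v (M *m v).
    by apply/eqP; rewrite eq_sym subr_eq -uv -hs addrC.
  by rewrite gerBl.
have Qsum' : forall v : 'cV[R[i]]_(qdim n * qdim n),
    inner v (M1 *m v) + inner v (M0 *m v) = inner v v.
  by move=> v; rewrite addrC Qsum.
have ub0 : ubound [set prob M1 rho | rho in @H0 R n] 1.
  move=> _ [rho [phi [psi [u1 [u2 ->]]]] <-].
  apply: (ub M0 M1 _ ps0 ps1 (Qsum _)).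
  by rewrite /unit_vec inner_tens u1 u2 mulr1.
have ub1 : ubound [set prob M0 rho | rho in @H1 R n eps] 1.
  move=> _ [rho [Psi [uP [-> _]]] <-].
  exact: (ub M1 M0 _ ps1 ps0 (Qsum' _)).
pose Psi (s : {ffun 'I_(qdim n) -> bool}) :=
  \sum_i ((c%:C)%C * sg (s i)) *: (ev i : 'cV[R[i]]_(qdim n * qdim n)).
have uPsi : forall s, unit_vec (Psi s).
  move=> s; rewrite /unit_vec -{2}[Psi s]mul1mx Q_Psi.
  under eq_bigr => i _.
    rewrite (bigD1 i) //= big1 => [|k ki]; last first.
      by rewrite mul1mx inner_e eq_sym (negbTE ki) mulr0.
    rewrite mul1mx inner_e eqxx sgK mulr1 mulr1 addr0.
  over.
  by rewrite sumr_const card_ord -mulr_natr cd.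
have fidPsi : forall s phi psi, unit_vec phi -> unit_vec psi ->
    pure_fidelity (Psi s) (phi *t psi) <= 1 - eps.
  move=> s phi psi u1 u2; rewrite /pure_fidelity.
  have -> : inner (Psi s) (phi *t psi) = \sum_i ((c%:C)%C * sg (s i)) * (phi i 0 * psi i 0).
    rewrite inner_suml; apply: eq_bigr => i _.
    by rewrite conj_real_mul /ev inner_tens !inner_delta.
  have : `|\sum_i ((c%:C)%C * sg (s i)) * (phi i 0 * psi i 0)| <= (c%:C)%C.
    apply: (le_trans (ler_norm_sum _ _ _)).
    have -> : \sum_i `|(c%:C)%C * sg (s i) * (phi i 0 * psi i 0)|
       = (c%:C)%C * \sum_i `|phi i 0| * `|psi i 0|.
      rewrite mulr_sumr; apply: eq_bigr => i _.
      rewrite !normrM ger0_norm ?ler0c //.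
      by case: (s i); rewrite /sg ?normrN normr1 mulr1.
    rewrite -[X in _ <= X]mulr1 ler_wpM2l ?ler0c //.
    exact: sum_norm_le.
  move=> /Re_le h.
  apply: (le_trans h); rewrite /c; move: epsle => h'.
  rewrite -subr_ge0 addrAC; rewrite -subr_ge0 in h'; exact: h'.
have h0 : forall i : 'I_(qdim n), inner (ev i) (M1 *m ev i) <= (S0%:C)%C.
  move=> i; apply: le_Re => //; rewrite -prob_proj.
  apply: ub_le_sup; first by exists 1.
  exists (proj (ev i)) => //.
  exists (delta_mx i 0), (delta_mx i 0).
  split; first exact: delta_unit.
  split; first exact: delta_unit.
  by [].
have h1 : forall s, inner (Psi s) (M0 *m Psi s) <= (S1%:C)%C.
  move=> s; apply: le_Re => //; rewrite -prob_proj.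
  apply: ub_le_sup; first by exists 1.
  exists (proj (Psi s)) => //.
  exists (Psi s); split; [exact: uPsi | split => //].
  exact: fidPsi.
set N := #|{ffun 'I_(qdim n) -> bool}|.
have Npos : (0 < N)%N by rewrite /N card_ffun card_bool expn_gt0.
have E1 : \sum_s inner (Psi s) (M0 *m Psi s) =
    (c%:C)%C ^+ 2 * N%:R * \sum_i inner (ev i) (M0 *m ev i).
  under eq_bigr do rewrite Q_Psi.
  rewrite exchange_big /= mulr_sumr; apply: eq_bigr => i _.
  rewrite exchange_big /=.
  under eq_bigr do rewrite -mulr_suml -mulr_sumr sign_sum.
  rewrite (bigD1 i) //= big1 => [|k ki]; last by rewrite eq_sym (negbTE ki) mul0r mulr0 mul0r.
  by rewrite eqxx mul1r addr0.
have E2 : \sum_i inner (ev i) (M0 *m ev i) = \sum_i (1 - inner (ev i) (M1 *m ev i)).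
  apply: eq_bigr => i _.
  have := Qsum (ev i); rewrite inner_ee => <-.
  by rewrite addrK.
have E3 : \sum_(i < qdim n) (1 - (S0%:C)%C) <= \sum_i (1 - inner (ev i) (M1 *m ev i)).
  by apply: ler_sum => i _; rewrite lerD2l lerN2 h0.
have E4 : \sum_s inner (Psi s) (M0 *m Psi s) <= \sum_(s : {ffun 'I_(qdim n) -> bool}) (S1%:C)%C.
  by apply: ler_sum => s _; exact: h1.
have L : N%:R * (1 - (S0%:C)%C) <= N%:R * (S1%:C)%C.
  have -> : N%:R * (S1%:C)%C = \sum_(s : {ffun 'I_(qdim n) -> bool}) (S1%:C)%C.
    by rewrite sumr_const mulr_natl.
  apply: le_trans E4; rewrite E1 E2.
  have -> : N%:R * (1 - (S0%:C)%C) =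
     (c%:C)%C ^+ 2 * N%:R * \sum_(i < qdim n) (1 - (S0%:C)%C).
    rewrite sumr_const card_ord -mulr_natr.
    transitivity (((c%:C)%C ^+ 2 * (qdim n)%:R) * N%:R * (1 - (S0%:C)%C)).
      by rewrite cd mul1r.
    ring.
  by rewrite ler_wpM2l // mulr_ge0 ?ler0n // exprn_ge0 // ler0c.
move: L; rewrite ler_pM2l ?ltr0n // => L.
have : ((1 - S0)%:C)%C <= (S1%:C)%C by rewrite rmorphB rmorph1.
rewrite lecR; lra.
Qed.
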